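(* Let $K\ge2$, let $\mathbf{p}$ be a probability vector on $[K]$ with all $p_k>0$, let $\mathbf{W}$ be a $K\times K$ invertible row-stochastic matrix, and let $\hat{\mathbf{p}}_n$, $\check{\mathbf{p}}_n$ be as in the context. For a positive integer $\rho$ and $k\in[K]$ define $\hat\mu^{(\rho)}_{n,k}=n^\rho\mathbb{E}[(\hat p_{n,k}-p_k)^\rho]$ and $\check\mu^{(\rho)}_{n,k}=n^\rho\mathbb{E}[(\check p_{n,k}-p_k)^\rho]$. Then there is a constant $C>0$ (not depending on $n$) such that for all $n$, $$\big|\hat\mu^{(\rho)}_{n,k}-\check\mu^{(\rho)}_{n,k}\big|\le C\,n^\rho e^{-nD(\partial\mathbb{P}\mathbf{W}\Vert\mathbf{p}\mathbf{W})}.$$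
   Context: Setting: $X_1,\dots,X_n$ i.i.d. with law $\mathbf{p}$; each passed independently through $\mathbf{W}$ ($\Pr\{Y_i=\ell\mid X_i=k\}=W_{k,\ell}$), giving $\mathbf{y}_n$ with empirical distribution $\mathbf{t}(\mathbf{y}_n)$; $\check{\mathbf{p}}_n=\mathbf{t}(\mathbf{y}_n)\mathbf{W}^{-1}$ and $\hat{\mathbf{p}}_n=\mathrm{Proj}_{\mathbb{P}}(\check{\mathbf{p}}_n)$, where $\mathrm{Proj}_{\mathbb{P}}$ is a fixed map from vectors with entries summing to one into the probability simplex $\mathbb{P}$ with $\mathrm{Proj}_{\mathbb{P}}(\mathbf{v})=\mathbf{v}$ on $\mathbb{P}$. $\partial\mathbb{P}=\{\mathbf{r}\in\mathbb{P}:r_i=0\text{ for some }i\}$ and $D(\partial\mathbb{P}\mathbf{W}\Vert\mathbf{p}\mathbf{W})=\inf_{\mathbf{r}\in\partial\mathbb{P}}D(\mathbf{r}\mathbf{W}\Vert\mathbf{p}\mathbf{W})$ with $D$ the Kullback–Leibler divergence. *)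

(* Defs.v *)
From HB Require Import structures.
From mathcomp Require Import all_boot all_order all_algebra.
From mathcomp Require Import all_classical all_reals all_analysis.
Set Implicit Arguments. Unset Strict Implicit. Unset Printing Implicit Defensive.
Import Order.TTheory GRing.Theory Num.Theory.
Local Open Scope ring_scope.
Local Open Scope classical_set_scope.

Section Defs.
Variable R : realType.
Variable K : nat.

Definition in_simplex (r : 'rV[R]_K) : Prop :=
  (forall i, 0 <= r 0 i) /\ \sum_i r 0 i = 1.

Definition in_boundary (r : 'rV[R]_K) : Prop :=
  in_simplex r /\ exists i, r 0 i = 0.

Definition row_stochastic (W : 'M[R]_K) : Prop :=
  (forall i j, 0 <= W i j) /\ (forall i, \sum_j W i j = 1).

Definition KL (q s : 'rV[R]_K) : R :=
  \sum_i (if q 0 i == 0 then 0 else q 0 i * ln (q 0 i / s 0 i)).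

Definition KL_boundary (W : 'M[R]_K) (p : 'rV[R]_K) : R :=
  inf [set KL (r *m W) (p *m W) | r in in_boundary].

Definition empirical (n : nat) (y : {ffun 'I_n -> 'I_K}) : 'rV[R]_K :=
  \row_l (#|[set i | y i == l]|%:R / n%:R).

Definition sample_prob (W : 'M[R]_K) (p : 'rV[R]_K) (n : nat)
    (y : {ffun 'I_n -> 'I_K}) : R :=
  \prod_i (p *m W) 0 (y i).

Definition Esample (W : 'M[R]_K) (p : 'rV[R]_K) (n : nat)
    (f : {ffun 'I_n -> 'I_K} -> R) : R :=
  \sum_(y : {ffun 'I_n -> 'I_K}) sample_prob W p y * f y.

Definition pcheck (W : 'M[R]_K) (n : nat) (y : {ffun 'I_n -> 'I_K}) : 'rV[R]_K :=
  empirical y *m invmx W.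

Definition phat (Proj : 'rV[R]_K -> 'rV[R]_K) (W : 'M[R]_K) (n : nat)
    (y : {ffun 'I_n -> 'I_K}) : 'rV[R]_K :=
  Proj (pcheck W y).

Definition mu_check (W : 'M[R]_K) (p : 'rV[R]_K) (rho n : nat) (k : 'I_K) : R :=
  n%:R ^+ rho * Esample W p (fun y : {ffun 'I_n -> 'I_K} => (pcheck W y 0 k - p 0 k) ^+ rho).

Definition mu_hat (Proj : 'rV[R]_K -> 'rV[R]_K) (W : 'M[R]_K) (p : 'rV[R]_K)
    (rho n : nat) (k : 'I_K) : R :=
  n%:R ^+ rho * Esample W p (fun y : {ffun 'I_n -> 'I_K} => (phat Proj W y 0 k - p 0 k) ^+ rho).

End Defs.

(* Main.v *)
Require Import Defs.
From HB Require Import structures.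
From mathcomp Require Import all_boot all_order all_algebra.
From mathcomp Require Import all_classical all_reals all_analysis.
From mathcomp Require Import ring lra.
Import Order.TTheory GRing.Theory Num.Theory.
Import numFieldNormedType.Exports.
Local Open Scope ring_scope.

Section Aux.
Variable R : realType.
Implicit Types x y q t s : R.
Lemma ln_le_sub1' x : 0 < x -> ln x <= x - 1.
Proof. move=> x0; have := expR_ge1Dx (ln x); rewrite lnK ?posrE //; lra. Qed.

Lemma lnB_le x y : 0 < x -> 0 < y -> ln x - ln y <= x / y - 1.
Proof.
move=> x0 y0; rewrite -ln_div ?posrE //; apply: ln_le_sub1'; exact: divr_gt0.
Qed.

Lemma kl_convex_term q t s : 0 < q -> 0 < t -> 0 <= s <= 1 ->
  ((1 - s) * q + s * t) * (ln ((1 - s) * q + s * t) - ln q)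
  <= s * (t * (ln t - ln q)).
Proof.
move=> q0 t0 /andP[s0 s1].
set x := (1 - s) * q + s * t.
have x0 : 0 < x.
  rewrite /x; case: (ltrP 0 s) => hs.
    by apply: ltr_wpDl; [apply: mulr_ge0; lra | exact: mulr_gt0].
  have -> : s = 0 by apply/eqP; rewrite eq_le hs s0.
  by rewrite subr0 mul1r mul0r addr0.
have e1 := @lnB_le x q x0 q0. have e2 := @lnB_le x t x0 t0.
have E : x * (ln x - ln q) - s * (t * (ln t - ln q)) =
   (1 - s) * q * (ln x - ln q) + s * t * (ln x - ln t) by rewrite /x; ring.
have h1 : (1 - s) * q * (ln x - ln q) <= (1 - s) * q * (x / q - 1).
  by apply: ler_wpM2l => //; apply: mulr_ge0 => //; [lra | exact: ltW].
have h2 : s * t * (ln x - ln t) <= s * t * (x / t - 1).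
  by apply: ler_wpM2l => //; apply: mulr_ge0 => //; exact: ltW.
have h3 : (1 - s) * q * (x / q - 1) + s * t * (x / t - 1) = 0.
  rewrite /x; field; rewrite ?gt_eqF //.
rewrite -subr_le0 E -h3; exact: lerD.
Qed.

Lemma KL_lb (K : nat) (u q : 'rV[R]_K) :
  (forall l, 0 <= u 0 l) -> (forall l, 0 < q 0 l) -> - \sum_l q 0 l <= KL u q.
Proof.
move=> u0 q0; rewrite /KL -sumrN; apply: ler_sum => l _.
case: eqP => [_|/eqP ne]; first by rewrite oppr_le0 ltW.
have ul : 0 < u 0 l by rewrite lt0r ne u0.
rewrite ln_div ?posrE //.
have h := @lnB_le (q 0 l) (u 0 l) (q0 l) ul.
have : u 0 l * (ln (u 0 l) - ln (q 0 l)) >= u 0 l * (1 - q 0 l / u 0 l).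
  by apply: ler_wpM2l; [exact: ltW | lra].
have -> : u 0 l * (1 - q 0 l / u 0 l) = u 0 l - q 0 l by field; exact: lt0r_neq0.
move: (u0 l); lra.
Qed.

Lemma KL_conv (K : nat) (q t : 'rV[R]_K) s :
  (forall l, 0 < q 0 l) -> (forall l, 0 < t 0 l) -> 0 <= s <= 1 ->
  KL ((1 - s) *: q + s *: t) q <= s * \sum_l t 0 l * (ln (t 0 l) - ln (q 0 l)).
Proof.
move=> q0 t0 /andP[s0 s1]; rewrite /KL mulr_sumr; apply: ler_sum => l _.
rewrite !mxE.
have x0 : 0 < (1 - s) * q 0 l + s * t 0 l.
  case: (ltrP 0 s) => hs.
    by apply: ltr_wpDl; [apply: mulr_ge0; [lra | exact: ltW] | exact: mulr_gt0].
  have -> : s = 0 by apply/eqP; rewrite eq_le hs s0.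
  by rewrite subr0 mul1r mul0r addr0.
rewrite gt_eqF // ln_div ?posrE //.
apply: kl_convex_term => //; by rewrite s0 s1.
Qed.

Lemma inv_rowsum (K : nat) (W : 'M[R]_K) :
  row_stochastic W -> W \in unitmx -> forall l, \sum_j invmx W l j = 1.
Proof.
move=> [_ Ws] Wu l.
pose u : 'cV[R]_K := const_mx 1.
have Wu1 : W *m u = u.
  by apply/matrixP => a b; rewrite !mxE -(Ws a); apply: eq_bigr => j _; rewrite mxE mulr1.
have : invmx W *m u = u by rewrite -{1}Wu1 mulmxA mulVmx // mul1mx.
move/matrixP => /(_ l 0); rewrite !mxE => <-.
by apply: eq_bigr => j _; rewrite mxE mulr1.
Qed.

Lemma rowsum_inv (K : nat) (W : 'M[R]_K) (v : 'rV[R]_K) :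
  row_stochastic W -> W \in unitmx ->
  \sum_j (v *m invmx W) 0 j = \sum_j v 0 j.
Proof.
move=> Ws Wu; under eq_bigr do rewrite mxE.
rewrite exchange_big /=; apply: eq_bigr => l _.
by rewrite -mulr_sumr inv_rowsum // mulr1.
Qed.

End Aux.
Section Aux.
Variable R : realType.

Lemma cont_term (c d : R) : continuous (fun lam : R => c * expR (- (lam * d))).
Proof.
have h0 : continuous (fun lam : R => lam * d).
  by move=> x; exact: (@continuousM _ _ id (fun=> d) x (fun P => id) (@cst_continuous _ _ d x)).
have h1 : continuous (fun lam : R => expR (- (lam * d))).
  move=> x; apply: (continuous_comp (f := fun lam : R => - (lam * d))); last exact: continuous_expR.
  exact: (@continuousN _ _ _ (fun lam : R => lam * d) x (h0 x)).
by move=> x; exact: (@continuousM _ _ (fun=> c) _ x (@cst_continuous _ _ c x) (h1 x)).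
Qed.

Lemma exists_root (K : nat) (q a : 'I_K -> R) :
  (forall l, 0 < q l) -> 0 < \sum_l q l * a l -> (exists l, a l < 0) ->
  exists lam, 0 <= lam /\ \sum_l q l * a l * expR (- (lam * a l)) = 0.
Proof.
move=> q0 f0 [l0 al0].
pose f := fun lam => \sum_l q l * a l * expR (- (lam * a l)).
pose A := \sum_l q l * `|a l|.
have A0 : 0 <= A by apply: sumr_ge0 => l _; apply: mulr_ge0; [exact: ltW|].
pose b := A / (q l0 * a l0 ^+ 2).
have qa0 : q l0 * a l0 < 0 by rewrite pmulr_rlt0.
have b0 : 0 <= b.
  by apply: divr_ge0 => //; apply: mulr_ge0; [exact: ltW | exact: sqr_ge0].
have fb : f b <= 0.
  rewrite /f (bigD1 l0) //=.
  have rest : \sum_(l | l != l0) q l * a l * expR (- (b * a l)) <=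
              \sum_(l | l != l0) q l * `|a l|.
    apply: ler_sum => l _.
    have e0 := expR_gt0 (- (b * a l)).
    case: (lerP 0 (a l)) => hal.
      have e1 : expR (- (b * a l)) <= 1.
        rewrite -expR0 ler_expR; rewrite oppr_le0; exact: mulr_ge0.
      rewrite ger0_norm // -mulrA; apply: ler_wpM2l; first exact: ltW.
      by rewrite -[X in _ <= X]mulr1; apply: ler_wpM2l.
    apply: (@le_trans _ _ 0).
      have := q0 l; set E := expR _ in e0 *; set Q := q l => Q0.
      have h : a l * E < 0 by nra.
      nra.
    by apply: mulr_ge0; [exact: ltW|].
  have AE : A = q l0 * `|a l0| + \sum_(l | l != l0) q l * `|a l| by rewrite /A (bigD1 l0).
  have ee := expR_ge1Dx (- (b * a l0)).
  have T0 : q l0 * a l0 * expR (- (b * a l0)) <= q l0 * a l0 * (1 + - (b * a l0)).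
    set c := q l0 * a l0 in qa0 *; nra.
  have bE : b * (q l0 * a l0 ^+ 2) = A.
    rewrite /b divfK //; apply: mulf_neq0; first exact: lt0r_neq0.
    by rewrite expf_neq0 // ltr0_neq0.
  have an : `|a l0| = - a l0 by rewrite ltr0_norm.
  rewrite an in AE.
  have : q l0 * a l0 * (1 + - (b * a l0)) = q l0 * a l0 - A by rewrite -bE; ring.
  lra.
have cf : continuous f.
  rewrite /f; apply: (continuous_big (op := +%R)) => //; first exact: add_continuous.
  by move=> l _; exact: cont_term.
have hv : Num.min (f 0) (f b) <= 0 <= Num.max (f 0) (f b).
  rewrite /Num.min /Num.max.
  have f0' : 0 < f 0.
    rewrite /f; under eq_bigr do rewrite mul0r oppr0 expR0 mulr1; exact: f0.
  rewrite ifF; last by apply/negbTE; rewrite -leNgt; apply: le_trans fb (ltW f0').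
  rewrite ifF; last by apply/negbTE; rewrite -leNgt; apply: le_trans fb (ltW f0').
  by rewrite fb ltW.
have [c] := IVT b0 (continuous_subspaceT cf) hv.
rewrite in_itv /= => /andP[c0 _] fc; exists c; split => //.
Qed.

End Aux.
Section Aux.
Variable R : realType.

Lemma npcheck (K n : nat) (W : 'M[R]_K) (y : {ffun 'I_n -> 'I_K}) (i : 'I_K) :
  (0 < n)%N -> n%:R * pcheck W y 0 i = \sum_j invmx W (y j) i.
Proof.
move=> n0; rewrite /pcheck mxE mulr_sumr.
rewrite (partition_big y xpredT) //=; apply: eq_bigr => l _.
rewrite /empirical mxE.
have -> : #|[set j | y j == l]%classic| = #|[pred j | y j == l]|.
  by apply: eq_card => j; rewrite /in_set inE /=; apply/asboolP/idP.
transitivity (invmx W l i *+ #|[pred j | y j == l]|); last first.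
  rewrite -sumr_const; apply: eq_big => // j /eqP ->; done.
rewrite mulrA mulrCA divff ?mulr1; last by rewrite pnatr_eq0 -lt0n.
by rewrite mulr_natl.
Qed.

Lemma my_chernoff (K n : nat) (W : 'M[R]_K) (p : 'rV[R]_K) (i : 'I_K) (lam : R) :
  (0 < n)%N -> 0 <= lam -> (forall l, 0 <= (p *m W) 0 l) ->
  \sum_(y : {ffun 'I_n -> 'I_K}) sample_prob W p y * ((pcheck W y 0 i < 0)%R : bool)%:R
  <= (\sum_l (p *m W) 0 l * expR (- (lam * invmx W l i))) ^+ n.
Proof.
move=> n0 lam0 q0.
set q := p *m W.
have -> : (\sum_l q 0 l * expR (- (lam * invmx W l i))) ^+ n =
   \sum_(y : {ffun 'I_n -> 'I_K}) \prod_j (q 0 (y j) * expR (- (lam * invmx W (y j) i))).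
  transitivity (\prod_(j < n) \sum_l q 0 l * expR (- (lam * invmx W l i))).
    by rewrite prodr_const card_ord.
  exact: bigA_distr_bigA.
apply: ler_sum => y _.
rewrite /sample_prob big_split /=.
have P0 : 0 <= \prod_j q 0 (y j) by apply: prodr_ge0 => j _.
case: ltrP => h; last by rewrite mulr0; apply: mulr_ge0 => //; apply: prodr_ge0 => j _; exact: ltW (expR_gt0 _).
rewrite mulr1 -[X in X <= _]mulr1; apply: ler_wpM2l => //.
rewrite -expR_sum -expR0 ler_expR sumrN -mulr_sumr -npcheck // oppr_ge0.
apply: mulr_ge0_le0 => //; rewrite mulr_ge0_le0 ?ler0n // ltW //.
Qed.

End Aux.

Section T.
Variable R : realType.

Lemma tilted_bound (K : nat) (p : 'rV[R]_K) (W : 'M[R]_K) (i : 'I_K) (lam : R) :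
  in_simplex p -> (forall l, 0 < p 0 l) -> row_stochastic W -> W \in unitmx ->
  (forall l, 0 < (p *m W) 0 l) ->
  \sum_l (p *m W) 0 l * invmx W l i * expR (- (lam * invmx W l i)) = 0 ->
  KL_boundary W p <= - ln (\sum_l (p *m W) 0 l * expR (- (lam * invmx W l i))).
Proof.
move=> [p0 p1] ppos Ws Wu qpos f0.
set q := p *m W in qpos f0 *.
set a := fun l => invmx W l i.
set e := fun l => expR (- (lam * a l)).
set M := \sum_l q 0 l * e l.
have M0 : 0 < M.
  have [l _] : exists l : 'I_K, true by exists i.
  rewrite /M (bigD1 l) //=; apply: ltr_pwDl; first by apply: mulr_gt0 => //; exact: expR_gt0.
  by apply: sumr_ge0 => j _; apply: mulr_ge0; [exact: ltW | exact: ltW (expR_gt0 _)].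
pose t : 'rV[R]_K := \row_l (q 0 l * e l / M).
have tpos : forall l, 0 < t 0 l.
  by move=> l; rewrite mxE; apply: divr_gt0 => //; apply: mulr_gt0 => //; exact: expR_gt0.
have t1 : \sum_l t 0 l = 1.
  under eq_bigr do rewrite mxE; by rewrite -mulr_suml divff // gt_eqF.
have ta : \sum_l t 0 l * a l = 0.
  under eq_bigr do rewrite mxE mulrAC.
  by rewrite -mulr_suml; under eq_bigr do rewrite -mulrA [e _ * _]mulrC mulrA; rewrite f0 mul0r.
have lnt : forall l, ln (t 0 l) - ln (q 0 l) = - (lam * a l) - ln M.
  move=> l; rewrite mxE ln_div ?posrE //; last by apply: mulr_gt0 => //; exact: expR_gt0.
  rewrite lnM ?posrE //; last exact: expR_gt0.
  rewrite /e expRK; ring.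
pose G := \sum_l t 0 l * (ln (t 0 l) - ln (q 0 l)).
have GE : G = - ln M.
  rewrite /G; under eq_bigr do rewrite lnt mulrBr mulrN mulrCA.
  rewrite sumrB sumrN -mulr_sumr ta -mulr_suml t1; ring.
have G0 : 0 <= G.
  have hq1 : \sum_l q 0 l = 1.
    by rewrite -p1 -(@rowsum_inv _ _ _ q Ws Wu) /q mulmxK.
  have hs : \sum_l (t 0 l - q 0 l) = 0 by rewrite sumrB t1 hq1 subrr.
  rewrite -hs /G; apply: ler_sum => l _.
  have h := @lnB_le _ (q 0 l) (t 0 l) (qpos l) (tpos l).
  have : t 0 l * (1 - q 0 l / t 0 l) <= t 0 l * (ln (t 0 l) - ln (q 0 l)).
    by apply: ler_wpM2l; [exact: ltW (tpos l) | lra].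
  have -> : t 0 l * (1 - q 0 l / t 0 l) = t 0 l - q 0 l by field; exact: lt0r_neq0.
  done.
pose rs := t *m invmx W.
have rsi : rs 0 i = 0 by rewrite /rs mxE; exact: ta.
pose sl := fun l => if rs 0 l <= 0 then p 0 l / (p 0 l - rs 0 l) else 2.
have [l0 Hl0] : exists l0, forall l, sl l0 <= sl l.
  by case: (@arg_minP _ _ _ i xpredT sl isT) => l0 _ H; exists l0 => l; exact: H.
set s := sl l0.
have si : sl i = 1 by rewrite /sl rsi lexx subr0 divff // gt_eqF.
have s1 : s <= 1 by rewrite -si Hl0.
have rl0 : rs 0 l0 <= 0.
  move: s1; rewrite /s /sl; case: ifP => // _; lra.
have d0 : 0 < p 0 l0 - rs 0 l0 by move: (ppos l0); lra.
have sE : s = p 0 l0 / (p 0 l0 - rs 0 l0) by rewrite /s /sl rl0.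
have s0 : 0 <= s by rewrite sE; apply: divr_ge0; [exact: ltW | exact: ltW].
pose r := (1 - s) *: p + s *: rs.
have rE : forall l, r 0 l = (1 - s) * p 0 l + s * rs 0 l by move=> l; rewrite !mxE.
have rW : r *m W = (1 - s) *: q + s *: t.
  by rewrite /r mulmxDl -!scalemxAl /rs mulmxKV.
have rB : in_boundary r.
  split; last first.
    exists l0; rewrite rE sE; field; exact: lt0r_neq0.
  split.
    move=> l; rewrite rE; case: (lerP (rs 0 l) 0) => hl.
      have : s <= p 0 l / (p 0 l - rs 0 l) by have := Hl0 l; rewrite /sl hl.
      have dl : 0 < p 0 l - rs 0 l by move: (ppos l); lra.
      rewrite ler_pdivlMr // => h.
      lra.
    apply: addr_ge0; apply: mulr_ge0; try lra; exact: ltW.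
  rewrite (eq_bigr _ (fun l _ => rE l)) big_split /= -!mulr_sumr p1.
  rewrite /rs rowsum_inv // t1; ring.
have KLb : KL_boundary W p <= KL (r *m W) (p *m W).
  rewrite /KL_boundary; apply: ge_inf; last by exists r.
  exists (- \sum_l q 0 l) => _ [r' [[r'0 _] _] <-].
  apply: KL_lb => // l; rewrite mxE; apply: sumr_ge0 => j _.
  by apply: mulr_ge0 => //; case: Ws => Wp _; exact: Wp.
apply: (le_trans KLb); rewrite rW -GE.
apply: (le_trans (@KL_conv R K q t s qpos tpos _)); first by rewrite s0 s1.
rewrite -/G; rewrite -[X in _ <= X]mul1r; apply: ler_wpM2r => //.
Qed.

End T.

Section M.
Variable R : realType.

Lemma q_pos (K : nat) (p : 'rV[R]_K) (W : 'M[R]_K) :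
  (forall l, 0 < p 0 l) -> row_stochastic W -> W \in unitmx ->
  forall l, 0 < (p *m W) 0 l.
Proof.
move=> pp [W0 _] Wu l; rewrite mxE.
have h : forall j, 0 <= p 0 j * W j l by move=> j; apply: mulr_ge0 => //; exact: ltW.
rewrite lt_def sumr_ge0 ?andbT //; apply/eqP => S0.
have z := psumr_eq0P (P := xpredT) (fun j _ => h j) S0.
have : (invmx W *m W) l l = 1 by rewrite mulVmx // mxE eqxx.
rewrite mxE big1; first by move/esym/eqP; rewrite oner_eq0.
move=> j _; have := z j isT; move/eqP; rewrite mulf_eq0 gt_eqF //= => /eqP ->; by rewrite mulr0.
Qed.

Lemma emp_bounds (K n : nat) (y : {ffun 'I_n -> 'I_K}) (l : 'I_K) :
  (0 < n)%N -> 0 <= empirical R y 0 l <= 1.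
Proof.
move=> n0; rewrite /empirical mxE; apply/andP; split.
  by apply: divr_ge0; apply: ler0n.
rewrite ler_pdivrMr ?ltr0n // mul1r ler_nat.
by apply: leq_trans (max_card _) _; rewrite card_ord.
Qed.

Lemma emp_sum (K n : nat) (y : {ffun 'I_n -> 'I_K}) :
  (0 < n)%N -> \sum_l empirical R y 0 l = 1.
Proof.
move=> n0.
have : \sum_(j < n) (1 : R) = n%:R by rewrite sumr_const card_ord.
rewrite (partition_big y xpredT) //= => E.
rewrite /empirical; under eq_bigr do rewrite mxE.
rewrite -mulr_suml.
suff -> : \sum_l (#|[set j | y j == l]%classic|%:R : R) = n%:R.
  by rewrite divff // pnatr_eq0 -lt0n.
rewrite -E; apply: eq_bigr => l _.
have -> : #|[set j | y j == l]%classic| = #|[pred j | y j == l]|.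
  by apply: eq_card => j; rewrite /in_set inE /=; apply/asboolP/idP.
by rewrite sumr_const.
Qed.

Lemma coord_bound (K : nat) (p : 'rV[R]_K) (W : 'M[R]_K) (i : 'I_K) (n : nat) :
  in_simplex p -> (forall l, 0 < p 0 l) -> row_stochastic W -> W \in unitmx ->
  (0 < n)%N ->
  \sum_(y : {ffun 'I_n -> 'I_K}) sample_prob W p y * ((pcheck W y 0 i < 0)%R : bool)%:R
  <= expR (- (n%:R * KL_boundary W p)).
Proof.
move=> ps pp Ws Wu n0.
have qp := @q_pos K p W pp Ws Wu.
case: (boolP [exists l, invmx W l i < 0]) => [/existsP [l al]|].
  have f0 : 0 < \sum_l (p *m W) 0 l * invmx W l i.
    have := pp i; have <- : (p *m W *m invmx W) 0 i = p 0 i by rewrite mulmxK.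
    by rewrite mxE.
  have [lam [lam0 flam]] := @exists_root R K (fun l => (p *m W) 0 l) (fun l => invmx W l i) qp f0 (ex_intro _ l al).
  have tb := @tilted_bound R K p W i lam ps pp Ws Wu qp flam.
  apply: (le_trans (@my_chernoff R K n W p i lam n0 lam0 (fun l => ltW (qp l)))).
  set M := \sum_l _.
  have M0 : 0 < M.
    rewrite /M (bigD1 l) //=; apply: ltr_pwDl; first by apply: mulr_gt0 => //; exact: expR_gt0.
    by apply: sumr_ge0 => j _; apply: mulr_ge0; [exact: ltW | exact: ltW (expR_gt0 _)].
  have ME : M <= expR (- KL_boundary W p).
    by rewrite -(lnK (x := M)) ?posrE // ler_expR lerNr.
  rewrite -mulrN expRM_natl.
  apply: lerXn2r => //; rewrite nnegrE ?ltW //; exact: expR_gt0.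
rewrite negb_exists => /forallP al.
rewrite big1; first exact: ltW (expR_gt0 _).
move=> y _.
suff : 0 <= pcheck W y 0 i by rewrite leNgt => /negbTE ->; rewrite mulr0.
have := @npcheck R K n W y i n0.
have : 0 <= \sum_j invmx W (y j) i by apply: sumr_ge0 => j _; rewrite leNgt al.
move=> h1 h2; rewrite -h2 in h1.
have nP : 0 < n%:R :> R by rewrite ltr0n.
by rewrite -(pmulr_rge0 _ nP).
Qed.

End M.

Section Main.
Variable R : realType.

Lemma simplex_le1 (K : nat) (v : 'rV[R]_K) (k : 'I_K) : in_simplex v -> 0 <= v 0 k <= 1.
Proof.
move=> [v0 v1]; rewrite v0 /= -v1 (bigD1 k) //= lerDl.
by apply: sumr_ge0 => j _.
Qed.

Lemma per_y (K n rho : nat) (p : 'rV[R]_K) (W : 'M[R]_K) (Proj : 'rV[R]_K -> 'rV[R]_K)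
    (k : 'I_K) (y : {ffun 'I_n -> 'I_K}) :
  in_simplex p -> row_stochastic W -> W \in unitmx ->
  (forall v : 'rV[R]_K, \sum_i v 0 i = 1 -> in_simplex (Proj v)) ->
  (forall v : 'rV[R]_K, in_simplex v -> Proj v = v) -> (0 < n)%N ->
  `|(phat Proj W y 0 k - p 0 k) ^+ rho - (pcheck W y 0 k - p 0 k) ^+ rho|
  <= (1 + (\sum_l `|invmx W l k| + 1) ^+ rho) *
     \sum_i ((pcheck W y 0 i < 0)%R : bool)%:R.
Proof.
move=> ps Ws Wu HP1 HP2 n0.
set B := \sum_l `|invmx W l k|.
have B0 : 0 <= B by apply: sumr_ge0 => l _.
set G := 1 + (B + 1) ^+ rho.
have G0 : 0 <= G by apply: addr_ge0 => //; apply: exprn_ge0; lra.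
have S0 : 0 <= \sum_i (((pcheck W y 0 i < 0)%R : bool)%:R : R).
  by apply: sumr_ge0 => i _; exact: ler0n.
have sum1 : \sum_i pcheck W y 0 i = 1.
  by rewrite /pcheck rowsum_inv // emp_sum.
case: (boolP [exists i, pcheck W y 0 i < 0]) => [/existsP [i0 hi0] | ].
  have S1 : 1 <= \sum_i (((pcheck W y 0 i < 0)%R : bool)%:R : R).
    rewrite (bigD1 i0) //= hi0 lerDl; apply: sumr_ge0 => i _; exact: ler0n.
  apply: (@le_trans _ _ G); last by rewrite -{1}[G]mulr1 ler_wpM2l.
  apply: (le_trans (ler_normB _ _)); apply: lerD.
    rewrite normrX; apply: exprn_ile1 => //.
    have := @simplex_le1 K _ k (HP1 _ sum1); have := @simplex_le1 K _ k ps.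
    rewrite /phat; move=> /andP[a0 a1] /andP[b0 b1].
    rewrite ler_norml; apply/andP; split; lra.
  rewrite normrX; apply: lerXn2r; rewrite ?nnegrE //; first lra.
  apply: (le_trans (ler_normB _ _)); apply: lerD; last first.
    by have := @simplex_le1 K _ k ps => /andP[a0 a1]; rewrite ger0_norm.
  rewrite /pcheck mxE; apply: (le_trans (ler_norm_sum _ _ _)); apply: ler_sum => l _.
  rewrite normrM; have /andP[e0 e1] := @emp_bounds R K n y l n0.
  rewrite ger0_norm // -[X in _ <= X]mul1r; apply: ler_wpM2r => //.
rewrite negb_exists => /forallP hneg.
have sp : in_simplex (pcheck W y).
  by split => // i; rewrite leNgt hneg.
by rewrite /phat HP2 // subrr normr0; apply: mulr_ge0.
Qed.

End Main.

Theorem lemma12 (R : realType) (K : nat) (p : 'rV[R]_K) (W : 'M[R]_K)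
    (Proj : 'rV[R]_K -> 'rV[R]_K) (rho : nat) (k : 'I_K) :
  (2 <= K)%N ->
  in_simplex p -> (forall i, 0 < p 0 i) ->
  row_stochastic W -> W \in unitmx ->
  (forall v : 'rV[R]_K, \sum_i v 0 i = 1 -> in_simplex (Proj v)) ->
  (forall v : 'rV[R]_K, in_simplex v -> Proj v = v) ->
  (0 < rho)%N ->
  exists C : R, 0 < C /\
    forall n : nat, (0 < n)%N ->
      `| mu_hat Proj W p rho n k - mu_check W p rho n k |
        <= C * n%:R ^+ rho * expR (- (n%:R * KL_boundary W p)).
Proof.
move=> K2 ps pp Ws Wu HP1 HP2 rho0.
set B := \sum_l `|invmx W l k|.
have B0 : 0 <= B by apply: sumr_ge0 => l _.
set G := 1 + (B + 1) ^+ rho.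
have G1 : 0 < G by apply: ltr_pwDl => //; apply: exprn_ge0; lra.
exists (G * K%:R); split.
  by apply: mulr_gt0 => //; rewrite ltr0n; apply: leq_trans K2.
move=> n n0.
set E := expR _.
have qp := @q_pos R K p W pp Ws Wu.
have pr0 : forall y : {ffun 'I_n -> 'I_K}, 0 <= sample_prob W p y.
  by move=> y; apply: prodr_ge0 => j _; exact: ltW.
rewrite /mu_hat /mu_check /Esample -mulrBr -sumrB normrM ger0_norm; last exact: exprn_ge0.
rewrite [G * _ * _]mulrC -mulrA; apply: ler_wpM2l; first exact: exprn_ge0.
apply: (le_trans (ler_norm_sum _ _ _)).
apply: (@le_trans _ _ (\sum_(y : {ffun 'I_n -> 'I_K}) G * \sum_i
    (sample_prob W p y * ((pcheck W y 0 i < 0)%R : bool)%:R))).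
  apply: ler_sum => y _; rewrite -mulrBr normrM ger0_norm // -mulr_sumr mulrCA.
  apply: ler_wpM2l => //; exact: (@per_y R).
rewrite -mulr_sumr exchange_big /= -mulrA; apply: ler_wpM2l; first exact: ltW.
apply: (@le_trans _ _ (\sum_(i < K) E)).
  by apply: ler_sum => i _; exact: (@coord_bound R).
by rewrite sumr_const card_ord mulr_natl.
Qed.
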